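(* Let $G=(V,E,\omega)$ have all its edge weights in a unital subring $\mathbb{U}\subseteq\mathbb{W}$, let $S=\{v_1,\dots,v_m\}\in st_0(G)$, and suppose each vertex of $G$ lies on a branch in $\mathcal{B}_S(G)$ (so that $\mathcal{L}_S(G)$ is defined). Then $G$ and $\mathcal{L}_S(G)$ are spectrally equivalent and have the same nonzero spectrum. Moreover, if $|G|>m+\sum_{j=1}^m(|\beta^j|-2)$ then $\mathcal{L}_S(G)$ is a reduction of $G$ over $\mathbb{U}$; otherwise it is an expansion of $G$ over $\mathbb{U}$.
   Context: Let $\mathbb{W}$ be the field of rational functions in a complex variable $\lambda$ with complex coefficients; a unital subring is a subring containing $1$. A graph $G=(V,E,\omega)$ is a finite directed graph with vertex set $V$, edges $E$ (loops allowed, at most one edge from a vertex to another), weights $\omega:E\to\mathbb{W}\setminus\{0\}$ (weight $0$ for non-edges); $M(G)_{ij}=\omega(e_{ij})$; $|G|$ = number of vertices; the weight set is $\omega(E)$. The spectrum $\sigma(G)$ is the list of roots, with multiplicity, of the numerator of $\det(M(G)-\lambda I)$ written in lowest terms; ''nonzero spectrum'' means this list with all zeros removed. $\bar S=V\setminus S$; $\ell(G)$ is $G$ without loops. A path is a sequence of distinct vertices $u_1,\dots,u_k$ ($k\ge2$) with edges $u_t\to u_{t+1}$; a cycle is the same with $u_1=u_k$, $u_1,\dots,u_{k-1}$ distinct; $u_2,\dots,u_{k-1}$ are interior; $|\beta|=k$. A nonempty $S\subseteq V$ is a structural set ($S\in st(G)$) if $\ell(G)|_{\bar S}$ has no cycles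 and $\omega(e_{ii})\ne\lambda$ for $v_i\in\bar S$; $st_0(G)$ consists of those $S\in st(G)$ with $\omega(e_{ii})=0$ for all $v_i\in\bar S$. $\mathcal{B}_{ij}(G;S)$ is the set of paths or cycles from $v_i\in S$ to $v_j\in S$ with no interior vertex in $S$ (branches); $\mathcal{B}_S(G)$ is their union. $\mathcal{P}_\omega(u_1,\dots,u_k)=\omega(u_1u_2)\prod_{t=2}^{k-1}\frac{\omega(u_tu_{t+1})}{\lambda-\omega(u_tu_t)}$; $\mathcal{R}_S(G)$ is the graph on $S$ with an edge $v_i\to v_j$ iff $\mathcal{B}_{ij}(G;S)\ne\emptyset$, weight $\sum_{\beta\in\mathcal{B}_{ij}(G;S)}\mathcal{P}_\omega(\beta)$. Graphs $G,H$ are spectrally equivalent if $\mathcal{R}_S(G)=\mathcal{R}_T(H)$ for some $S\in st(G)$, $T\in st(H)$. If $G,H$ are spectrally equivalent with weight sets in $\mathbb{U}$, then $H$ is a reduction of $G$ over $\mathbb{U}$ if $|H|<|G|$ and an expansion of $G$ over $\mathbb{U}$ if $|H|\ge|G|$. $\mathcal{L}$-construction: for $S=\{v_1,\dots,v_m\}\in st_0(G)$ with every vertex of $G$ on a branch, for each $j$ choose a branch $\beta^j$ ending at $v_j$ of maximal length $|\beta^j|$ among branches in $\bigcup_i\mathcal{B}_{ij}(G;S)$. Build a graph $\tilde{\mathcal{X}}$ consisting of the vertices of $S$ together with, for each $j$, a separate new copy of the interior vertices of $\beta^j$ (pairwise disjoint for different $j$), forming a path $\beta^j_{\ell_j},\beta^j_{\ell_j-1},\dots,\beta^j_0$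 where $\ell_j=|\beta^j|-1$, $\beta^j_{\ell_j}\in S$ is the starting vertex of $\beta^j$ and $\beta^j_0=v_j$; give the edge $\beta^j_{\ell_j}\to\beta^j_{\ell_j-1}$ weight $\lambda^{|\beta^j|-2}\mathcal{P}_\omega(\beta^j)$ and all other edges of these paths weight $1$. Then, for each other branch $\gamma\in\mathcal{B}_{ij}(G;S)$, $\gamma\neq\beta^j$, add an edge from $v_i$ to $\beta^j_{|\gamma|-2}$ of weight $\lambda^{|\gamma|-2}\mathcal{P}_\omega(\gamma)$; parallel edges thus created are merged into one edge whose weight is the sum. The result is $\mathcal{L}_S(G)$; it has $m+\sum_{j}(|\beta^j|-2)$ vertices. *)

(* Defs.v *)
From HB Require Import structures.
From mathcomp Require Import all_boot all_order all_algebra.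
From mathcomp Require Import complex.
From mathcomp Require Import Rstruct.
From Stdlib Require Rdefinitions.

Set Implicit Arguments.
Unset Strict Implicit.
Unset Printing Implicit Defensive.

Import Order.TTheory GRing.Theory Num.Theory.
Local Open Scope ring_scope.

Notation C := (complex Rdefinitions.R).

Notation W := {fraction {poly C}}.

Definition polyW (p : {poly C}) : W := @FracField.tofrac _ p.

Definition lam : W := polyW 'X.

(* A weighted digraph on the finite vertex type V: G u v is the weight of the
   edge u -> v, and G u v = 0 means there is no edge u -> v (loops allowed,
   at most one edge per ordered pair). *)
Definition graph (V : finType) := V -> V -> W.

Section Graphs.
Variables (V : finType) (G : graph V).

Definition edge : rel V := fun u v => G u v != 0.
Definition edge_noloop : rel V := fun u v => (u != v) && (G u v != 0).

Definition is_pathb (e : rel V) (s : seq V) : bool :=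
  if s is x :: s' then (0 < size s')%N && uniq s && path e x s' else false.

Definition is_cycleb (e : rel V) (s : seq V) : bool :=
  if s is x :: s' then
    [&& (0 < size s')%N, last x s' == x, uniq s' & path e x s']
  else false.

Definition interior (s : seq V) : seq V := take (size s - 2) (behead s).

Definition restr_noloop (S : {set V}) : rel V :=
  fun u v => [&& edge_noloop u v, u \notin S & v \notin S].

Definition structural (S : {set V}) : Prop :=
  [/\ S != set0,
      (forall s, ~~ is_cycleb (restr_noloop S) s) &
      (forall v, v \notin S -> G v v != lam)].

Definition structural0 (S : {set V}) : Prop :=
  structural S /\ (forall v, v \notin S -> G v v = 0).

Definition branchb (S : {set V}) (i j : V) (s : seq V) : bool :=
  [&& is_pathb edge s || is_cycleb edge s,
      head i s == i, last i s == j, i \in S, j \in S &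
      all (fun v => v \notin S) (interior s)].

Fixpoint pw_tail (u : V) (s : seq V) : W :=
  if s is v :: s' then G u v / (lam - G u u) * pw_tail v s' else 1.

Definition pw (s : seq V) : W :=
  if s is u1 :: (u2 :: s') as s1 then G u1 u2 * pw_tail u2 s' else 0.

(* Every branch has at most #|V| + 1 vertices, so summing over all tuples of
   length < #|V| + 2 enumerates each branch exactly once. *)
Definition branch_sum (S : {set V}) (i j : V) (F : seq V -> W) : W :=
  \sum_(k < #|V|.+2) \sum_(t : k.-tuple V | branchb S i j t) F t.

Definition reduction_graph (S : {set V}) : graph {x : V | x \in S} :=
  fun a b => branch_sum S (val a) (val b) pw.

Definition charf : W :=
  \det ((\matrix_(a < #|V|, b < #|V|) G (enum_val a) (enum_val b))
        - lam%:M).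

End Graphs.
Arguments reduction_graph [V] G S _ _.

Definition lowest_numer (f : W) (p : {poly C}) : Prop :=
  exists q : {poly C}, [/\ q != 0, coprimep p q & f = polyW p / polyW q].

Definition same_nonzero_spectrum (V1 V2 : finType) (G1 : graph V1)
    (G2 : graph V2) : Prop :=
  exists p1 p2, [/\ lowest_numer (charf G1) p1, lowest_numer (charf G2) p2 &
    forall c : C, c != 0 -> mup c p1 = mup c p2].

Definition spec_equiv (V1 V2 : finType) (G1 : graph V1) (G2 : graph V2) : Prop :=
  exists (S : {set V1}) (T : {set V2}),
    [/\ structural G1 S, structural G2 T &
      exists f : {x : V1 | x \in S} -> {y : V2 | y \in T},
        bijective f /\
        forall a b : {x : V1 | x \in S}, reduction_graph G1 S a b = reduction_graph G2 T (f a) (f b)].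

Definition weights_in (U : {pred W}) (V : finType) (G : graph V) : Prop :=
  forall u v, G u v != 0 -> G u v \in U.

Definition is_reduction (U : {pred W}) (V1 V2 : finType) (G : graph V1)
  (H : graph V2) : Prop :=
  [/\ spec_equiv G H, weights_in U G, weights_in U H & (#|V2| < #|V1|)%N].

Definition is_expansion (U : {pred W}) (V1 V2 : finType) (G : graph V1)
  (H : graph V2) : Prop :=
  [/\ spec_equiv G H, weights_in U G, weights_in U H & (#|V1| <= #|V2|)%N].

Definition max_branch_to (V : finType) (G : graph V) (S : {set V}) (j : V)
    (b : seq V) : Prop :=
  (exists i, branchb G S i j b) /\
  (forall i s, branchb G S i j s -> (size s <= size b)%N).

(* The vertices of
   L_S(G) are the vertices of S (inl) together with, for each j, fresh copies
   beta^j_1, ..., beta^j_(l_j - 1) of the interior vertices of beta^j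
   (inr (j, t) stands for beta^j_(t+1)), where l_j = |beta^j| - 1. *)
Section LConstruction.
Variables (V : finType) (G : graph V) (S : {set V}).
Local Notation Sv := {x : V | x \in S}.
Variable beta : Sv -> seq V.

Definition Lvert := (Sv + {j : Sv & 'I_(size (beta j) - 2)})%type.

Definition Lpos (x : Lvert) : Sv * nat :=
  match x with
  | inl j => (j, 0%N)
  | inr p => (tag p, (nat_of_ord (tagged p)).+1)
  end.

(* Edge weights of L_S(G), after merging parallel edges:
   - beta^j_(t+1) -> beta^j_t has weight 1 (for the new vertices);
   - beta^j_(l_j) (the start of beta^j, in S) -> beta^j_(l_j - 1) has weight
     lambda^(|beta^j|-2) P(beta^j);
   - for every other branch gamma in B_ij(G;S), gamma <> beta^j, an edge
     v_i -> beta^j_(|gamma|-2) of weight lambda^(|gamma|-2) P(gamma). *)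
Definition Lgraph : graph Lvert :=
  fun x y =>
  let: (j, t) := Lpos y in
  match x with
  | inr p => if Lpos y == (tag p, nat_of_ord (tagged p)) then 1 else 0
  | inl i =>
      (if (head (val j) (beta j) == val i) && (t == size (beta j) - 2)%N
       then lam ^+ (size (beta j) - 2) * pw G (beta j) else 0)
      + branch_sum G S (val i) (val j)
          (fun g => if (g != beta j) && (size g - 2 == t)%N
                    then lam ^+ (size g - 2) * pw G g else 0)
  end.

End LConstruction.
Arguments Lvert [V] S beta.
Arguments Lgraph [V] G S beta _ _.

(* Main.v *)
Require Import Defs.
From HB Require Import structures.
From mathcomp Require Import all_boot all_order all_algebra.
From mathcomp Require Import complex Rstruct.
From mathcomp Require Import zify ring.
From mathcomp Require Import fingroup perm.
Set Implicit Arguments.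
Unset Strict Implicit.
Unset Printing Implicit Defensive.
Import Order.TTheory GRing.Theory Num.Theory.
Local Open Scope ring_scope.
Lemma fracP (x : W) : exists p q, q != 0 /\ x = polyW p / polyW q.
Proof.
elim/quotW: x => r.
exists (frac r).1, (frac r).2; split; first exact: denom_ratioP.
rewrite /polyW !piE.
apply/eqmodP => /=.
rewrite FracField.equivfE /= /FracField.mulf /FracField.invf.
have d0 := denom_ratioP r.
rewrite !numden_Ratio ?oner_eq0 //= ?mulr1 ?mul1r ?mulf_neq0 ?oner_eq0 //.
by rewrite mulrC.
Qed.

Lemma polyW_eq p q : (polyW p == polyW q) = (p == q).
Proof. exact: tofrac_eq. Qed.

Lemma lowest_exists f : exists p, lowest_numer f p.
Proof.
have [P [Q [Q0 ->]]] := fracP f.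
set g := gcdp P Q.
have gP : g %| P by rewrite dvdp_gcdl.
have gQ : g %| Q by rewrite dvdp_gcdr.
have g0 : g != 0 by rewrite gcdp_eq0 negb_and Q0 orbT.
exists (P %/ g), (Q %/ g); split.
- apply: contraNneq Q0 => e; by rewrite -(divpK gQ) e mul0r.
- by apply: coprimep_div_gcd; rewrite Q0 orbT.
- rewrite -{1}(divpK gP) -{1}(divpK gQ) /polyW !rmorphM /=.
  have gW : FracField.tofrac g != 0 by rewrite tofrac_eq0.
  by rewrite invfM mulrACA divff // mulr1.
Qed.

Lemma lowest_mup f1 f2 p1 p2 u1 u2 (c : C) :
  lowest_numer f1 p1 -> lowest_numer f2 p2 ->
  f1 * polyW u1 = f2 * polyW u2 -> u1 != 0 -> u2 != 0 ->
  ~~ root u1 c -> ~~ root u2 c -> mup c p1 = mup c p2.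
Proof.
move=> [q1 [q10 cop1 ->]] [q2 [q20 cop2 ->]] E u10 u20 r1 r2.
have W1 : polyW q1 != 0 by rewrite tofrac_eq0.
have W2 : polyW q2 != 0 by rewrite tofrac_eq0.
have E' : p1 * u1 * q2 = p2 * u2 * q1.
  apply/eqP; rewrite -polyW_eq /polyW !rmorphM /=; apply/eqP.
  move: E => /(congr1 (fun x => x * polyW q1 * polyW q2)).
  rewrite /polyW in W1 W2 * => E.
  have e1 : forall a b d : W, d != 0 -> a / d * b * d = a * b.
    by move=> a b d d0; rewrite mulrAC mulfVK.
  by move: E; rewrite e1 // [_ * tofrac q1 * tofrac q2]mulrAC e1.
have [p10|p10] := eqVneq p1 0.
  have : p2 * u2 * q1 == 0 by rewrite -E' p10 !mul0r.
  by rewrite !mulf_eq0 (negbTE u20) (negbTE q10) !orbF p10 => /eqP ->.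
have [p20|p20] := eqVneq p2 0.
  have : p1 * u1 * q2 == 0 by rewrite E' p20 !mul0r.
  by rewrite !mulf_eq0 (negbTE u10) (negbTE q20) (negbTE p10).
move: (congr1 (mup c) E').
rewrite !mupM ?mulf_neq0 // (mupNroot r1) (mupNroot r2) !addn0.
have H1 : (mup c p1 == 0)%N || (mup c q1 == 0)%N.
  case: (posnP (mup c p1)) => //= h; apply/eqP/mupNroot.
  move: h; rewrite -XsubC_dvd // dvdp_XsubCl => rp.
  exact: (coprimep_root cop1 rp).
have H2 : (mup c p2 == 0)%N || (mup c q2 == 0)%N.
  case: (posnP (mup c p2)) => //= h; apply/eqP/mupNroot.
  move: h; rewrite -XsubC_dvd // dvdp_XsubCl => rp.
  exact: (coprimep_root cop2 rp).
move: H1 H2; case/orP=> /eqP-> ; case/orP => /eqP ->; lia.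
Qed.
Lemma det_reindex n (T : finType) (F : T -> T -> W) (e1 e2 : 'I_n -> T) :
  bijective e1 -> bijective e2 ->
  \det (\matrix_(a, b) F (e1 a) (e1 b)) = \det (\matrix_(a, b) F (e2 a) (e2 b)).
Proof.
move=> [g1 c1 c1'] [g2 c2 c2'].
have inj : injective (g2 \o e1).
  move=> x y /= /(congr1 e2); rewrite !c2' => /(congr1 g1); by rewrite !c1.
set s := perm inj.
have -> : \matrix_(a, b) F (e1 a) (e1 b) =
          row_perm s (col_perm s (\matrix_(a, b) F (e2 a) (e2 b))).
  by apply/matrixP => a b; rewrite !mxE !permE /= !c2'.
rewrite row_permE col_permE !det_mulmx !det_perm odd_permV.
by rewrite mulrCA -expr2 sqrr_sign mulr1.
Qed.

Definition detF (T : finType) (F : T -> T -> W) : W :=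
  \det (\matrix_(a < #|T|, b < #|T|) F (enum_val a) (enum_val b)).

Lemma detF_any n (T : finType) (F : T -> T -> W) (e : 'I_n -> T) :
  bijective e -> \det (\matrix_(a, b) F (e a) (e b)) = detF F.
Proof.
move=> be.
have Hn : n = #|T| by rewrite -(bij_eq_card be) card_ord.
subst n; rewrite /detF; apply: det_reindex => //.
exact: (Bijective (@enum_valK T) (@enum_rankK T)).
Qed.

Lemma detF_bij (T1 T2 : finType) (F1 : T1 -> T1 -> W) (F2 : T2 -> T2 -> W)
  (f : T1 -> T2) : bijective f -> (forall a b, F1 a b = F2 (f a) (f b)) ->
  detF F1 = detF F2.
Proof.
move=> bf E; rewrite /detF.
rewrite (_ : \matrix_(a, b) F1 (enum_val a) (enum_val b) =
   \matrix_(a, b) F2 ((f \o enum_val) a) ((f \o enum_val) b)); last first.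
  by apply/matrixP => a b; rewrite !mxE E.
apply: detF_any; apply: bij_comp => //.
exact: (Bijective (@enum_valK T1) (@enum_rankK T1)).
Qed.

Lemma det_schur m r (A : 'M[W]_m) B C (D : 'M[W]_r) X :
  X *m D = 1%:M ->
  \det (block_mx A B C D) = \det (A - B *m X *m C) * \det D.
Proof.
move=> XD.
have -> : block_mx A B C D =
  block_mx 1%:M (B *m X) 0 1%:M *m block_mx (A - B *m X *m C) 0 C D.
  rewrite mulmx_block !mul1mx !mul0mx ?mulmx0 !add0r ?addr0 -!mulmxA XD mulmx1.
  by rewrite subrK.
by rewrite det_mulmx det_ublock det_lblock !det1 !mul1r.
Qed.

Lemma telescope_mx (R : pzRingType) (N : R) k :
  (\sum_(i < k) N ^+ i) * (1 - N) = 1 - N ^+ k.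
Proof.
elim: k => [|k IH]; first by rewrite big_ord0 mul0r expr0 subrr.
by rewrite big_ord_recr /= mulrDl IH mulrBr mulr1 -exprSr addrA subrK.
Qed.

Lemma exprZ_mx (R : comNzRingType) r (x : R) (M : 'M[R]_r) k :
  (x *: M) ^+ k = x ^+ k *: M ^+ k.
Proof.
elim: k => [|k IH]; first by rewrite !expr0 scale1r.
by rewrite !exprSr IH -!mulmxE -scalemxAl -scalemxAr scalerA.
Qed.

Lemma map_mxX_gen (R S : comNzRingType) (f : {rmorphism R -> S}) r (M : 'M[R]_r) k :
  map_mx f (M ^+ k) = (map_mx f M) ^+ k.
Proof.
elim: k => [|k IH]; first by rewrite !expr0 map_mx1.
by rewrite !exprSr -!mulmxE map_mxM IH.
Qed.

Lemma det_nilp r (N : 'M[W]_r) : N ^+ r = 0 -> \det (1 - N) = 1.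
Proof.
move=> Nr.
set NP := map_mx polyC N.
set P := \det (1 - 'X *: NP).
set Q := \det (\sum_(i < r) ('X *: NP) ^+ i).
have PQ : Q * P = 1.
  rewrite /P /Q -det_mulmx mulmxE telescope_mx.
  rewrite exprZ_mx /NP -map_mxX_gen Nr map_mx0 scaler0 subr0; exact: det1.
have uP : P \is a GRing.unit by apply/unitrPr; exists Q; rewrite mulrC.
move: uP; rewrite poly_unitE => /andP [/eqP sP _].
have Pc : P = (P`_0)%:P by apply: size1_polyC; rewrite sP.
have ev : forall x : W, P.[x] = \det (1 - x *: N).
  move=> x; rewrite /P -horner_evalE -det_map_mx map_mxB map_mx1 map_mxZ /= /NP.
  rewrite horner_evalE hornerX.
  by congr (\det (_ - _ *: _)); apply/matrixP => i j; rewrite !mxE /= horner_evalE hornerC.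
have e0 := ev 0; have e1 := ev 1.
rewrite scale0r subr0 det1 in e0; rewrite scale1r in e1.
by rewrite -e1 Pc hornerC; rewrite Pc hornerC in e0.
Qed.
Lemma sum_tuple0 (T : finType) (F : seq T -> W) :
  \sum_(t : 0.-tuple T) F t = F [::].
Proof.
by rewrite (big_pred1 [tuple]) // => t /=; apply/esym/eqP; exact: tuple0.
Qed.

Lemma sum_tuple_cons (T : finType) n (F : seq T -> W) :
  \sum_(t : n.+1.-tuple T) F t = \sum_x \sum_(t : n.-tuple T) F (x :: t).
Proof.
rewrite pair_big /=.
rewrite (reindex (fun p : T * n.-tuple T => [tuple of p.1 :: p.2])) //=.
exists (fun t : n.+1.-tuple T => (thead t, [tuple of behead t])).
  by move=> [x t] _ /=; congr pair; try exact: (@tnth0 _ _ x t); apply: val_inj.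
move=> t _; apply: val_inj => /=.
by case: t => [[|x s] //=] H; rewrite /thead (tnth_nth x).
Qed.

Lemma sum_tuple_rcons (T : finType) n (F : seq T -> W) :
  \sum_(t : n.+1.-tuple T) F t = \sum_(t : n.-tuple T) \sum_y F (rcons t y).
Proof.
elim: n F => [|n IH] F.
  rewrite sum_tuple_cons (sum_tuple0 (fun t => \sum_y F (rcons t y))).
  by apply: eq_bigr => x _; rewrite (sum_tuple0 (fun t => F (x :: t))).
rewrite sum_tuple_cons (sum_tuple_cons n (fun t => \sum_y F (rcons t y))).
by apply: eq_bigr => x _; rewrite (IH (fun t => F (x :: t))).
Qed.

Section Cyc.
Variables (T : eqType) (r : rel T).

Definition is_cyc (s : seq T) :=
  if s is x :: s' then
    [&& (0 < size s')%N, last x s' == x, uniq s' & path r x s']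
  else false.

Lemma split_first (x : T) s : x \in s -> exists p q, s = p ++ x :: q /\ x \notin p.
Proof.
elim: s => [|y s IH] //; rewrite in_cons.
have [->|xy] := eqVneq x y => /= H.
  by exists [::], s.
have [p [q [-> xp]]] := IH H.
by exists (y :: p), q; split => //; rewrite in_cons negb_or xy.
Qed.

Lemma cycle_extract n : forall x s, (size s <= n)%N -> path r x s -> ~~ uniq (x :: s) ->
  exists c, is_cyc c.
Proof.
elim: n => [|n IH] x s; first by case: s.
move=> sn ps nu.
have [xs|xs] := boolP (x \in s).
  have [p [q [es xp]]] := split_first xs.
  move: ps sn; rewrite es cat_path /= => /andP [pp /andP [e pq]] sn.
  have [up|up] := boolP (uniq p).
    exists (x :: rcons p x) => /=.
    by rewrite size_rcons last_rcons eqxx rcons_uniq xp up rcons_path pp e.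
  case: p pp e up sn {xp es} => [|y p] pp e up sn; first by [].
  apply: (IH y p) => //; last by case/andP: pp.
  by move: sn; rewrite size_cat /=; lia.
move: nu; rewrite /= xs /= => nu.
case: s ps sn nu {xs} => [|y s] //= /andP [_ ps] sn nu.
exact: (IH y s).
Qed.
End Cyc.

Lemma sum_unique (I : finType) (F : I -> W) x0 :
  (forall x, x != x0 -> F x = 0) -> \sum_x F x = F x0.
Proof.
move=> h; rewrite (bigD1 x0) //= big1 ?addr0 // => x /h; done.
Qed.

Lemma lam_neq0 : lam != 0.
Proof. by rewrite /lam /polyW tofrac_eq0 polyX_eq0. Qed.

Lemma sum_cut r n (F : nat -> W) : (forall k, (r <= k)%N -> F k = 0) -> (r <= n)%N ->
  \sum_(k < n) F k = \sum_(k < r) F k.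
Proof.
move=> h rn; rewrite (big_ord_widen n F rn).
rewrite (bigID (fun k : 'I_n => (k < r)%N)) /= [X in _ + X]big1 ?addr0 // => k.
by rewrite -leqNgt => /h.
Qed.

Section Red.
Variables (V : finType) (H : graph V) (S : {set V}).
Hypothesis hcyc : forall s, ~~ is_cycleb (restr_noloop H S) s.
Hypothesis hloop : forall v, v \notin S -> H v v = 0.

Local Notation restr := (restr_noloop H S).
Local Notation nS := (fun v => v \notin S).

Fixpoint E k u v : W :=
  if k is k'.+1 then \sum_(w | w \notin S) H u w * E k' w v else (u == v)%:R.

Fixpoint wt (u : V) (s : seq V) : W :=
  if s is v :: s' then H u v * wt v s' else 1.

Lemma restr_notin u v : restr u v -> (u \notin S) && (v \notin S).
Proof. by case/and3P => _ -> ->. Qed.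

Lemma path_restr_all x s : path restr x s -> s != [::] -> all nS (x :: s).
Proof.
elim: s x => [|y s IH] x //= /andP [e ps] _.
case/andP: (restr_notin e) => -> ->.
case: s IH ps => [|z s] IH ps //=.
by have := IH y ps isT => /= /andP [_ ->].
Qed.

Lemma uniq_restr x s : path restr x s -> uniq (x :: s).
Proof.
move=> ps; apply/negPn/negP => nu.
have [c cc] := cycle_extract (leqnn (size s)) ps nu.
by move: (hcyc c); rewrite /is_cyc in cc; rewrite /is_cycleb cc.
Qed.

Lemma size_notin s : uniq s -> all nS s -> (size s <= #|~: S|)%N.
Proof.
move=> us al; rewrite cardE; apply: uniq_leq_size => // x xs.
by rewrite mem_enum in_setC; move/allP: al => /(_ x xs).
Qed.

Lemma walk_of_E k u v : u \notin S -> E k u v != 0 ->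
  exists s, [/\ size s = k, path restr u s & last u s = v].
Proof.
elim: k u => [|k IH] u uS /=.
  by case: (eqVneq u v) => [->|_]; [exists [::] | rewrite eqxx].
move=> ne.
have [w /andP [wS nz]] : exists w, (w \notin S) && (H u w * E k w v != 0).
  apply/existsP; apply: contraNT ne; rewrite negb_exists => /forallP h.
  apply/eqP; apply: big1 => w wS; move: (h w); rewrite wS /= negbK => /eqP.
  done.
move: nz; rewrite mulf_eq0 negb_or => /andP [huw ne'].
have [s [ss ps ls]] := IH w wS ne'.
exists (w :: s); split => //=; first by rewrite ss.
rewrite ps andbT /restr_noloop /edge_noloop huw uS wS !andbT.
by apply: contraNneq huw => <-; rewrite hloop.
Qed.

Lemma E_nilp k u v : u \notin S -> (#|~: S| <= k)%N -> E k u v = 0.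
Proof.
move=> uS kr; apply/eqP; apply: contraT => ne.
have [s [ss ps _]] := walk_of_E uS ne.
have := size_notin (uniq_restr ps).
case: s ss ps => [|y s] ss ps.
  by rewrite /= uS => /(_ isT); move: kr; rewrite -ss /=; lia.
by rewrite (path_restr_all ps) // => /(_ isT) /=; move: kr; rewrite -ss /=; lia.
Qed.

Definition Tw p u j : W :=
  \sum_(m : p.-tuple V) (if all nS m then wt u (rcons m j) else 0).

Lemma Tw0 u j : Tw 0 u j = H u j.
Proof.
rewrite /Tw (sum_tuple0 (fun m => if all nS m then wt u (rcons m j) else 0)) /=.
by rewrite mulr1.
Qed.

Lemma TwS p u j : Tw p.+1 u j = \sum_(x | x \notin S) H u x * Tw p x j.
Proof.
rewrite /Tw (sum_tuple_cons p (fun m => if all nS m then wt u (rcons m j) else 0)).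
rewrite [RHS]big_mkcond /=; apply: eq_bigr => x _.
case: ifP => xS /=.
  rewrite big_distrr /=; apply: eq_bigr => m _.
  by case: ifP => _; rewrite ?mulr0.
by rewrite big1.
Qed.

Lemma TwE k u j : u \notin S ->
  Tw k u j = \sum_(w | w \notin S) E k u w * H w j.
Proof.
elim: k u => [|k IH] u uS.
  rewrite Tw0 (bigD1 u) //= eqxx mul1r big1 ?addr0 // => w /andP [_ wu].
  by rewrite eq_sym (negbTE wu) mul0r.
rewrite TwS /=.
transitivity (\sum_(x | x \notin S) \sum_(w | w \notin S) H u x * (E k x w * H w j)).
  by apply: eq_bigr => x xS; rewrite IH // big_distrr.
rewrite exchange_big /=; apply: eq_bigr => w _.
rewrite big_distrl /=; apply: eq_bigr => x _; by rewrite mulrA.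
Qed.

Lemma Tw_nilp k i j : (#|~: S| <= k)%N -> Tw k.+1 i j = 0.
Proof.
move=> kr; rewrite TwS big1 // => u uS; rewrite TwE // big1 ?mulr0 // => w _.
by rewrite E_nilp // mul0r.
Qed.

Lemma pwt u m j : all nS (u :: m) ->
  pw_tail H u (rcons m j) = wt u (rcons m j) / lam ^+ (size m).+1.
Proof.
elim: m u => [|x m IH] u /= /andP [uS al].
  by rewrite hloop // subr0 !mulr1 expr1.
rewrite hloop // subr0 IH // !exprS !invfM !mulrA.
by rewrite [H u x / lam * _]mulrAC.
Qed.

Lemma pw_wt i m j : all nS m -> pw H (i :: rcons m j) = wt i (rcons m j) / lam ^+ size m.
Proof.
case: m => [|x m] al /=; first by rewrite expr0 invr1 !mulr1.
by rewrite pwt // mulrA.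
Qed.

Lemma wt0 u s : ~~ path (edge H) u s -> wt u s = 0.
Proof.
elim: s u => [|v s IH] u //=; rewrite negb_and => /orP [|].
  by rewrite /edge negbK => /eqP ->; rewrite mul0r.
by move/IH ->; rewrite mulr0.
Qed.

Lemma interior_rcons (x : V) m y : @interior V (x :: rcons m y) = m.
Proof.
by rewrite /interior /= size_rcons !subSS subn0 -cats1 take_size_cat.
Qed.

Lemma path_to_restr x m : all nS (x :: m) -> path (edge H) x m -> path restr x m.
Proof.
elim: m x => [|y m IH] x //= /and3P [xS yS al] /andP [e pm].
rewrite IH ?andbT //; last by rewrite /= yS al.
rewrite /restr_noloop /edge_noloop xS yS !andbT.
have e' : H x y != 0 by [].
rewrite e' andbT; apply/eqP => xy; move: e'; rewrite xy hloop // eqxx.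
by [].
Qed.

Lemma term_eq i j x m y : i \in S -> j \in S ->
  (if branchb H S i j (x :: rcons m y) then pw H (x :: rcons m y) else 0) =
  (if (x == i) && (y == j) && all nS m then pw H (i :: rcons m j) else 0).
Proof.
move=> Si Sj.
rewrite /branchb interior_rcons [head _ _]/= [last _ _]/= last_rcons Si Sj.
have [->|xi] := eqVneq x i; last by rewrite !(andFb, andbF).
have [->|yj] := eqVneq y j; last by rewrite !(andTb, andFb, andbF).
rewrite !andTb.
case: (boolP (all nS m)) => al; last by rewrite andbF.
rewrite andbT.
have [pe|npe] := boolP (path (edge H) i (rcons m j)); last first.
  by case: ifP => // _; rewrite pw_wt // wt0 // mul0r.
have um : uniq m.
  case: m al pe => [|x1 m] //= al /andP [_ pe].
  apply: (uniq_restr (x := x1)); apply: path_to_restr => //.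
  by move: pe; rewrite rcons_path => /andP [].
have iNm : i \notin m by apply: contraL Si => im; move/allP: al => /(_ i im).
have jNm : j \notin m by apply: contraL Sj => jm; move/allP: al => /(_ j jm).
suff -> : is_pathb (edge H) (i :: rcons m j) || is_cycleb (edge H) (i :: rcons m j) by [].
rewrite /is_pathb /is_cycleb size_rcons last_rcons /= pe !andbT rcons_uniq um jNm andbT.
rewrite mem_rcons in_cons negb_or iNm andbT.
by case: eqVneq.
Qed.

Lemma branch_p i j p : i \in S -> j \in S ->
  \sum_(t : p.+2.-tuple V | branchb H S i j t) pw H t = Tw p i j / lam ^+ p.
Proof.
move=> Si Sj.
rewrite big_mkcond (sum_tuple_cons p.+1 (fun t => if branchb H S i j t then pw H t else 0)).
transitivity (\sum_x \sum_(m : p.-tuple V) \sum_y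
   (if branchb H S i j (x :: rcons m y) then pw H (x :: rcons m y) else 0)).
  apply: eq_bigr => x _.
  exact: (sum_tuple_rcons p (fun t => if branchb H S i j (x :: t) then pw H (x :: t) else 0)).
transitivity (\sum_x \sum_(m : p.-tuple V) \sum_y
   (if (x == i) && (y == j) && all nS m then pw H (i :: rcons m j) else 0)).
  apply: eq_bigr => x _; apply: eq_bigr => m _; apply: eq_bigr => y _.
  exact: term_eq.
rewrite (sum_unique (x0 := i)); last first.
  move=> x /negbTE xi; apply: big1 => m _; apply: big1 => y _.
  by rewrite xi.
rewrite /Tw big_distrl /=; apply: eq_bigr => m _.
rewrite (sum_unique (x0 := j)); last first.
  by move=> y /negbTE yj; rewrite yj andbF.
rewrite !eqxx andTb andTb; case: ifP => al; last by rewrite mul0r.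
change (pw H (i :: rcons m j) = wt i (rcons m j) / lam ^+ p).
by rewrite pw_wt // size_tuple.
Qed.

Lemma branch_sum_Tw i j : i \in S -> j \in S ->
  branch_sum H S i j (pw H) = \sum_(p < #|V|) Tw p i j / lam ^+ p.
Proof.
move=> Si Sj.
rewrite /branch_sum big_ord_recl big_ord_recl /=.
rewrite big_mkcond (sum_tuple0 (fun t => if branchb H S i j t then pw H t else 0)) /=.
rewrite big_mkcond (sum_tuple_cons 0 (fun t => if branchb H S i j t then pw H t else 0)) /=.
rewrite big1 => [|x _]; last first.
  by rewrite (sum_tuple0 (fun t => if branchb H S i j (x :: t) then pw H (x :: t) else 0)).
rewrite !add0r; apply: eq_bigr => p _.
exact: branch_p.
Qed.

Lemma red_formula i j K : i \in S -> j \in S -> (#|~: S| <= K)%N ->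
  branch_sum H S i j (pw H) = H i j + \sum_(k < K) Tw k.+1 i j / lam ^+ k.+1.
Proof.
move=> Si Sj rK; rewrite branch_sum_Tw //.
have hV : #|V| = (#|V|.-1).+1.
  by rewrite prednK //; apply/card_gt0P; exists i.
have rV : (#|~: S| <= #|V|.-1)%N.
  have := cardsC S; have : (0 < #|S|)%N by apply/card_gt0P; exists i.
  lia.
rewrite hV big_ord_recl /= Tw0 expr0 invr1 mulr1; congr (_ + _).
rewrite (@sum_cut #|~: S| _ (fun k => Tw k.+1 i j / lam ^+ k.+1)) //; last first.
  by move=> k kr; rewrite Tw_nilp // mul0r.
rewrite [RHS](@sum_cut #|~: S| _ (fun k => Tw k.+1 i j / lam ^+ k.+1)) //.
by move=> k kr; rewrite Tw_nilp // mul0r.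
Qed.

Local Notation SS := {x : V | x \in S}.
Local Notation SC := {x : V | x \in ~: S}.

Lemma sumSC (f : V -> W) :
  \sum_(c < #|{: SC}|) f (val (enum_val c : SC)) = \sum_(w | w \notin S) f w.
Proof.
rewrite -(big_enum_val (A := predT) (fun x : SC => f (val x))).
rewrite -(big_sub (~: S) f).
by apply: eq_bigl => w; rewrite in_setC.
Qed.

Definition sv (a : 'I_#|{: SS}|) : V := val (enum_val a : SS).
Definition sc (c : 'I_#|{: SC}|) : V := val (enum_val c : SC).

Lemma sv_in a : sv a \in S.
Proof. exact: (valP (enum_val a : SS)). Qed.
Lemma sc_notin c : sc c \notin S.
Proof. by have := valP (enum_val c : SC); rewrite in_setC. Qed.

Lemma sv_eq a b : (sv a == sv b) = (a == b).
Proof. by rewrite /sv (inj_eq val_inj) (inj_eq enum_val_inj). Qed.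
Lemma sc_eq a b : (sc a == sc b) = (a == b).
Proof. by rewrite /sc (inj_eq val_inj) (inj_eq enum_val_inj). Qed.

Definition esplit (a : 'I_(#|{: SS}| + #|{: SC}|)) : V :=
  match split a with inl a' => sv a' | inr c => sc c end.

Lemma esplit_bij : bijective esplit.
Proof.
apply: inj_card_bij; last first.
  by rewrite card_ord !card_sig -(cardsC S); apply: leq_add; apply: subset_leq_card;
     apply/subsetP => x; rewrite !inE.
move=> a b; rewrite /esplit -[a]splitK -[b]splitK.
case: (split a) => a'; case: (split b) => b'; rewrite !unsplitK.
- by move=> /eqP; rewrite sv_eq => /eqP ->.
- by move=> e; have := sv_in a'; rewrite e (negbTE (sc_notin b')).
- by move=> e; have := sv_in b'; rewrite -e (negbTE (sc_notin a')).
- by move=> /eqP; rewrite sc_eq => /eqP ->.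
Qed.

Lemma charf_detF : charf H = detF (fun u v => H u v - (u == v)%:R * lam).
Proof.
rewrite /charf /detF; congr (\det _); apply/matrixP => a b.
by rewrite !mxE (inj_eq enum_val_inj) mulr_natl.
Qed.

Definition D0 : 'M[W]_#|{: SC}| := \matrix_(c, d) H (sc c) (sc d).

Lemma D0X k c d : (D0 ^+ k) c d = E k (sc c) (sc d).
Proof.
elim: k c d => [|k IH] c d.
  by rewrite expr0 !mxE /= sc_eq.
rewrite exprS -mulmxE mxE /=.
rewrite -(sumSC (fun w => H (sc c) w * E k w (sc d))).
by apply: eq_bigr => e _; rewrite IH mxE.
Qed.

Lemma D0nil : D0 ^+ #|{: SC}| = 0.
Proof.
apply/matrixP => c d; rewrite D0X mxE E_nilp ?sc_notin //.
rewrite card_sig; apply: subset_leq_card; apply/subsetP => x; rewrite !inE.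
by [].
Qed.

Local Notation r := #|{: SC}|.
Local Notation m := #|{: SS}|.
Definition Fc (u v : V) : W := H u v - (u == v)%:R * lam.
Definition Ap : 'M[W]_m := \matrix_(a, b) Fc (sv a) (sv b).
Definition Bm : 'M[W]_(m, r) := \matrix_(a, d) H (sv a) (sc d).
Definition Cm : 'M[W]_(r, m) := \matrix_(c, b) H (sc c) (sv b).
Definition Dp : 'M[W]_r := D0 - lam%:M.
Definition Nm : 'M[W]_r := lam^-1 *: D0.
Definition Xm : 'M[W]_r := (- lam^-1) *: \sum_(k < r) Nm ^+ k.

Lemma blockE : \matrix_(a, b) Fc (esplit a) (esplit b) = block_mx Ap Bm Cm Dp.
Proof.
apply/matrixP => a b; rewrite mxE /esplit -[a]splitK -[b]splitK.
case: (split a) => a'; case: (split b) => b'; rewrite !unsplitK /=.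
- by rewrite block_mxEul !mxE.
- rewrite block_mxEur !mxE /Fc.
  suff -> : (sv a' == sc b') = false by rewrite mul0r subr0.
  by apply/negbTE; apply: contraNneq (sc_notin b') => <-; exact: sv_in.
- rewrite block_mxEdl !mxE /Fc.
  suff -> : (sc a' == sv b') = false by rewrite mul0r subr0.
  by apply/negbTE; apply: contraNneq (sc_notin a') => ->; exact: sv_in.
- by rewrite block_mxEdr !mxE /Fc sc_eq mulr_natl.
Qed.

Lemma Nmnil : Nm ^+ r = 0.
Proof. by rewrite /Nm exprZ_mx D0nil scaler0. Qed.

Lemma DpE : Dp = (- lam) *: (1 - Nm).
Proof.
rewrite /Dp /Nm scalerBr scalerA mulNr divff ?lam_neq0 // scaleN1r opprK.
by rewrite scaleNr scalemx1 addrC.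
Qed.

Lemma XD : Xm *m Dp = 1%:M.
Proof.
rewrite DpE /Xm -scalemxAl -scalemxAr scalerA mulrNN mulVf ?lam_neq0 // scale1r.
by rewrite mulmxE telescope_mx Nmnil subr0.
Qed.

Lemma detDp : \det Dp = (- lam) ^+ r.
Proof. by rewrite DpE detZ det_nilp ?Nmnil // mulr1. Qed.

Lemma BDC k a b : (Bm *m D0 ^+ k *m Cm) a b = Tw k.+1 (sv a) (sv b).
Proof.
rewrite TwS -sumSC !mxE.
transitivity (\sum_d \sum_c H (sv a) (sc c) * (E k (sc c) (sc d) * H (sc d) (sv b))).
  apply: eq_bigr => d _; rewrite !mxE big_distrl /=; apply: eq_bigr => c _.
  by rewrite !mxE D0X mulrA.
rewrite exchange_big /=; apply: eq_bigr => c _.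
rewrite TwE ?sc_notin // -sumSC big_distrr /=; done.
Qed.

Lemma BXC a b :
  (Bm *m Xm *m Cm) a b = - \sum_(k < r) Tw k.+1 (sv a) (sv b) / lam ^+ k.+1.
Proof.
rewrite /Xm -scalemxAr mulmx_sumr -scalemxAl mulmx_suml mxE summxE.
rewrite big_distrr -sumrN /=; apply: eq_bigr => k _.
rewrite /Nm exprZ_mx -scalemxAr -scalemxAl mxE BDC.
by rewrite exprVn exprS invfM mulNr mulrA mulrC.
Qed.

Lemma cardSC : #|{: SC}| = #|~: S|.
Proof. by rewrite card_sig; apply: eq_card => x; rewrite !inE. Qed.

Lemma charf_red : charf H = (- lam) ^+ #|{: SC}| *
  detF (fun x y : SS => reduction_graph H S x y - (x == y)%:R * lam).
Proof.
rewrite charf_detF.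
change (detF Fc = (- lam) ^+ #|{: SC}| *
  detF (fun x y : SS => reduction_graph H S x y - (x == y)%:R * lam)).
rewrite -(detF_any Fc esplit_bij) blockE (det_schur _ _ _ XD) detDp mulrC; congr (_ * _).
rewrite /detF; congr (\det _); apply/matrixP => a b.
have h : forall M N : 'M[W]_m, (M - N) a b = M a b - N a b by move=> M N; rewrite !mxE.
rewrite h BXC opprK [Ap a b]mxE /reduction_graph mxE (@red_formula _ _ #|{: SC}|) ?sv_in ?cardSC //.
rewrite /Fc (inj_eq enum_val_inj) -sv_eq.
by rewrite addrAC.
Qed.

End Red.

Section BS.
Variables (V : finType) (G : graph V) (S : {set V}) (i j : V).

Lemma eq_branch_sum (F F' : seq V -> W) :
  (forall g, branchb G S i j g -> F g = F' g) ->
  branch_sum G S i j F = branch_sum G S i j F'.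
Proof. by move=> h; apply: eq_bigr => k _; apply: eq_bigr => t /h. Qed.

Lemma branch_sumD (F F' : seq V -> W) :
  branch_sum G S i j (fun g => F g + F' g) =
  branch_sum G S i j F + branch_sum G S i j F'.
Proof. by rewrite /branch_sum -big_split; apply: eq_bigr => k _; rewrite big_split. Qed.

Lemma branch_sumMl (F : seq V -> W) c :
  branch_sum G S i j F * c = branch_sum G S i j (fun g => F g * c).
Proof. by rewrite /branch_sum big_distrl; apply: eq_bigr => k _; rewrite big_distrl. Qed.

Lemma branch_sum_sum N (F : nat -> seq V -> W) :
  \sum_(t < N) branch_sum G S i j (F t) =
  branch_sum G S i j (fun g => \sum_(t < N) F t g).
Proof.
rewrite /branch_sum exchange_big; apply: eq_bigr => k _.
by rewrite exchange_big.
Qed.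

Lemma size_le_card (s : seq V) : uniq s -> (size s <= #|V|)%N.
Proof. by move=> u; rewrite cardE; apply: uniq_leq_size u _ => y; rewrite mem_enum. Qed.

Lemma branch_size g : branchb G S i j g -> (2 <= size g < #|V|.+2)%N.
Proof.
case/andP => h _.
case: g h => [|x s] //= /orP [/andP [/andP [s0 u] _] | /and4P [s0 _ u _]].
  have := size_le_card (s := x :: s); rewrite /= u => /(_ isT).
  by rewrite ltnS s0 /=; lia.
have := size_le_card u; rewrite ltnS s0 /=; lia.
Qed.

Lemma branch_sum_single (s : seq V) (F : seq V -> W) : (size s < #|V|.+2)%N ->
  branch_sum G S i j (fun g => if g == s then F g else 0) =
  if branchb G S i j s then F s else 0.
Proof.
move=> hs; rewrite /branch_sum (sum_unique (x0 := Ordinal hs)) /=; last first.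
  move=> k kne; apply: big1 => t _; case: eqP => // e.
  by case/eqP: kne; apply: val_inj => /=; rewrite -e size_tuple.
rewrite big_mkcond (sum_unique (x0 := in_tuple s)) /=.
  by case: ifP => //; rewrite eqxx.
move=> t tne; case: ifP => // _; case: eqP => // e.
by case/eqP: tne; apply: val_inj.
Qed.
End BS.

Section UClosed.
Variable U : {pred W}.
Hypothesis hU : GRing.subring_closed U.
Lemma U1 : 1 \in U. Proof. by case: hU. Qed.
Lemma UB x y : x \in U -> y \in U -> x - y \in U. Proof. by case: hU => _ h _; apply: h. Qed.
Lemma UM x y : x \in U -> y \in U -> x * y \in U. Proof. by case: hU => _ _ h; apply: h. Qed.
Lemma U0 : 0 \in U. Proof. by rewrite -(subrr 1) UB ?U1. Qed.
Lemma UD x y : x \in U -> y \in U -> x + y \in U.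
Proof. by move=> hx hy; rewrite -[y]opprK -[- y]add0r UB // UB // U0. Qed.
Lemma Unat (b : bool) : (b%:R : W) \in U.
Proof. by case: b; [exact: U1 | exact: U0]. Qed.
Lemma Usum (I : Type) (r : seq I) (P : pred I) (F : I -> W) :
  (forall i, P i -> F i \in U) -> \sum_(i <- r | P i) F i \in U.
Proof. by move=> h; apply: (big_ind (fun x => x \in U)) => //; [exact: U0 | exact: UD]. Qed.
End UClosed.

Section LCon.
Variables (V : finType) (G : graph V) (S : {set V}).
Local Notation Sv := {x : V | x \in S}.
Variable beta : Sv -> seq V.

Local Notation n j := (size (beta j) - 2)%N.
Local Notation Lv := (Lvert S beta).
Local Notation L := (Lgraph G S beta).
Local Notation Q := {j : Sv & 'I_(size (beta j) - 2)}.

Definition isl (x : Lv) : bool := if x is inl _ then true else false.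
Definition T : {set Lv} := [set x | isl x].

Definition Lw (i j : Sv) (t : nat) : W :=
  (if (head (val j) (beta j) == val i) && (t == n j)
   then lam ^+ n j * pw G (beta j) else 0)
  + branch_sum G S (val i) (val j)
      (fun g => if (g != beta j) && (size g - 2 == t)%N
                then lam ^+ (size g - 2) * pw G g else 0).

Lemma L_inl_inl i j : L (inl i) (inl j) = Lw i j 0.
Proof. by []. Qed.
Lemma L_inl_inr i q : L (inl i) (inr q) = Lw i (tag q) (val (tagged q)).+1.
Proof. by []. Qed.
Lemma L_inr_inl p j : L (inr p) (inl j) = ((j == tag p) && (0 == val (tagged p)))%:R.
Proof. by rewrite /Lgraph /= xpair_eqE; case: ifP. Qed.
Lemma L_inr_inr p q : L (inr p) (inr q) =
  ((tag q == tag p) && ((val (tagged q)).+1 == val (tagged p)))%:R.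
Proof. by rewrite /Lgraph /= xpair_eqE; case: ifP. Qed.

Lemma Q_eq (p q : Q) : tag p = tag q -> val (tagged p) = val (tagged q) -> p = q.
Proof.
case: p => jp kp; case: q => jq kq /= e; subst jq => /val_inj -> //.
Qed.

Lemma sum_tagged (F : Sv -> nat -> W) j k :
  \sum_(q : Q) (if (tag q == j) && (val (tagged q) == k) then F (tag q) (val (tagged q)) else 0)
  = if (k < n j)%N then F j k else 0.
Proof.
case: ltnP => kn.
  rewrite (sum_unique (x0 := Tagged (fun j => 'I_(n j)) (Ordinal kn))) /=; last first.
    move=> q qne; case: ifP => // /andP [/eqP e1 /eqP e2].
    by case/eqP: qne; apply: Q_eq.
  by rewrite !eqxx.
rewrite big1 // => q _; case: ifP => // /andP [/eqP e1 /eqP e2].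
have : (k < n (tag q))%N by rewrite -e2; exact: ltn_ord.
move: kn; rewrite -e1 => kn' h; by rewrite ltnNge kn' in h.
Qed.

Lemma sum_notT (F : Lv -> W) :
  \sum_(x | x \notin T) F x = \sum_(q : Q) F (inr q).
Proof.
rewrite big_sumType /= big_pred0 ?add0r => [|i]; last by rewrite inE.
by apply: eq_bigl => q; rewrite inE.
Qed.

Lemma TwL_inr k p j : Tw L T k (inr p) (inl j) = ((tag p == j) && (val (tagged p) == k))%:R.
Proof.
elim: k p => [|k IH] p.
  by rewrite Tw0 L_inr_inl eq_sym [0%N == _]eq_sym.
rewrite TwS sum_notT.
transitivity (\sum_(q : Q) (if (tag q == j) && (val (tagged q) == k)
   then (fun (_ : Sv) (_ : nat) => ((tag p == j) && (val (tagged p) == k.+1))%:R : W) (tag q) (val (tagged q)) else 0)).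
  apply: eq_bigr => q _; rewrite IH L_inr_inr.
  case: ifP => [/andP [/eqP e1 /eqP e2] | _]; last by rewrite mulr0.
  have -> : (tag q == tag p) = (j == tag p) by rewrite e1.
  have -> : ((\val (tagged q)).+1 == \val (tagged p)) = (k.+1 == \val (tagged p)) by rewrite e2.
  by rewrite mulr1 eq_sym [k.+1 == _]eq_sym.
rewrite (sum_tagged (fun _ _ => ((tag p == j) && (val (tagged p) == k.+1))%:R)).
case: ltnP => // kn.
case: eqP => //= e; case: eqP => //= e'.
have : (k.+1 < n (tag p))%N by rewrite -e'; exact: ltn_ord.
by rewrite e ltnNge (leq_trans kn (leqnSn _)).
Qed.

Lemma TwL_inl k i j : Tw L T k.+1 (inl i) (inl j) = if (k < n j)%N then Lw i j k.+1 else 0.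
Proof.
rewrite TwS sum_notT -(sum_tagged (fun j k => Lw i j k.+1)).
apply: eq_bigr => q _; rewrite TwL_inr L_inl_inr.
by case: ifP => _; rewrite ?mulr1 ?mulr0.
Qed.

Lemma LwSum i j : max_branch_to G S (val j) (beta j) ->
  \sum_(t < (n j).+1) Lw i j t / lam ^+ t = branch_sum G S (val i) (val j) (pw G).
Proof.
move=> [[i0 bi0] hmax].
have /andP [sb1 sb2] := branch_size bi0.
have hb : branchb G S (val i) (val j) (beta j) = (head (val j) (beta j) == val i).
  move: bi0; rewrite /branchb; case: (beta j) => [|x s] //=.
  case/andP => P /andP [_ /andP [lj /andP [_ /andP [jS int]]]].
  by rewrite P lj jS int (valP i) /= !andbT.
have lamn t : lam ^+ t != 0 by rewrite expf_neq0 // lam_neq0.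
transitivity (\sum_(t < (n j).+1)
  ((if (head (val j) (beta j) == val i) && (t == n j :> nat) then pw G (beta j) else 0)
   + branch_sum G S (val i) (val j)
      (fun g => if (g != beta j) && (size g - 2 == t)%N then pw G g else 0))).
  apply: eq_bigr => t _; rewrite /Lw mulrDl branch_sumMl; congr (_ + _).
    case: ifP => [/andP [_ /eqP ->]|_]; last by rewrite mul0r.
    by rewrite [lam ^+ _ * _]mulrC (mulfK (lamn _)).
  apply: eq_branch_sum => g _.
  case: ifP => [/andP [_ /eqP ->]|_]; last by rewrite mul0r.
  by rewrite [lam ^+ t * _]mulrC (mulfK (lamn t)).
rewrite big_split /= (@branch_sum_sum V G S (val i) (val j) (n j).+1 (fun (t : nat) g => if (g != beta j) && (size g - 2 == t)%N then pw G g else 0)).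
rewrite (sum_unique (x0 := ord_max)) /=; last first.
  move=> t tne; case: ifP => // /andP [_ /eqP e].
  by case/eqP: tne; apply: val_inj.
rewrite eqxx andbT.
rewrite (eq_branch_sum (F' := fun g => if g != beta j then pw G g else 0)); last first.
  move=> g bg; case: (boolP (g != beta j)) => gb /=; last by rewrite big1.
  have hg : (size g - 2 < (n j).+1)%N.
    by have := hmax _ _ bg; rewrite ltnS; apply: leq_sub2r.
  rewrite (sum_unique (x0 := Ordinal hg)) /= ?eqxx //.
  move=> t tne; case: eqP => // e.
  by case/eqP: tne; apply: val_inj; rewrite /= e.
transitivity (branch_sum G S (val i) (val j) (fun g => if g == beta j then pw G g else 0)
   + branch_sum G S (val i) (val j) (fun g => if g != beta j then pw G g else 0)).
  by rewrite branch_sum_single // hb.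
rewrite -branch_sumD; apply: eq_branch_sum => g _.
by case: eqP => _ /=; rewrite ?addr0 ?add0r.
Qed.

Lemma hloopL v : v \notin T -> L v v = 0.
Proof.
case: v => [i|p]; first by rewrite inE.
by rewrite L_inr_inr eqxx /= (gtn_eqF (ltnSn _)).
Qed.

Definition phi (x : Lv) : nat := if x is inr p then (val (tagged p)).+1 else 0.

Lemma restr_phi u v : restr_noloop L T u v -> (phi v < phi u)%N.
Proof.
case/and3P => /andP [_ e]; case: u e => [i|p] e; rewrite ?inE //.
case: v e => [j|q] e; rewrite ?inE //= => _ _.
move: e; rewrite L_inr_inr.
case: (tag q == tag p); last by rewrite /= eqxx.
case E: ((val (tagged q)).+1 == val (tagged p)); last by rewrite /= eqxx.
by move=> _; rewrite /= -(eqP E).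
Qed.

Lemma path_phi x s : path (restr_noloop L T) x s -> s != [::] ->
  (phi (last x s) < phi x)%N.
Proof.
elim: s x => [|y s IH] x //= /andP [e ps] _.
have := restr_phi e; case: s IH ps => [|z s] IH ps //=.
by move=> h; apply: ltn_trans h; apply: IH.
Qed.

Lemma hcycL s : ~~ is_cycleb (restr_noloop L T) s.
Proof.
case: s => [|x s] //=; apply/negP => /and4P [s0 lx _ ps].
have : s != [::] by case: s s0 {lx ps}.
by move/(path_phi ps); rewrite (eqP lx) ltnn.
Qed.

Lemma inlT (i : Sv) : (inl i : Lv) \in T.
Proof. by rewrite inE. Qed.

Definition fi (i : Sv) : {y : Lv | y \in T} := exist _ (inl i) (inlT i).

Lemma RL_eq i j : max_branch_to G S (val j) (beta j) ->
  reduction_graph L T (fi i) (fi j) = reduction_graph G S i j.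
Proof.
move=> hb.
rewrite /reduction_graph /= (@red_formula _ _ _ hcycL hloopL _ _ (#|~: T| + n j)) ?inlT ?leq_addr //.
rewrite L_inl_inl.
rewrite (@sum_cut (n j) _ (fun k => Tw L T k.+1 (inl i) (inl j) / lam ^+ k.+1)); last first.
- by rewrite leq_addl.
- by move=> k kn; rewrite TwL_inl ltnNge kn mul0r.
rewrite -(LwSum i hb) big_ord_recl /= expr0 invr1 mulr1; congr (_ + _).
apply: eq_bigr => k _; by rewrite TwL_inl ltn_ord.
Qed.

Lemma fi_bij : bijective fi.
Proof.
apply: inj_card_bij.
  by move=> a b /(congr1 val) /= [].
rewrite card_sig.
have -> : #|[pred x | x \in T]| = #|[set (inl x : Lv) | x : Sv]|.
  apply: eq_card => y; rewrite !inE; case: y => [x|p] /=.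
    by rewrite (imset_f (fun x => inl x : Lv)).
  apply/esym/negbTE/imsetP => -[x _]; done.
by rewrite card_imset // => a b [].
Qed.

Lemma card_Lv : #|{: Lv}| = (#|S| + \sum_(j : Sv) (size (beta j) - 2))%N.
Proof.
rewrite card_sum card_sig card_tagged sumnE big_map big_enum /=.
congr addn; apply: eq_bigr => j _; exact: card_ord.
Qed.

Section Weights.
Variable U : {pred W}.
Hypothesis hU : GRing.subring_closed U.
Hypothesis hwG : weights_in U G.
Hypothesis hloopG : forall v, v \notin S -> G v v = 0.

Lemma wt_U u s : wt G u s \in U.
Proof.
elim: s u => [|v s IH] u /=; first exact: U1.
apply: UM => //; case: (eqVneq (G u v) 0) => [->|h]; [exact: U0 | exact: hwG].
Qed.

Lemma branch_term_U i' j' g : branchb G S i' j' g ->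
  lam ^+ (size g - 2) * pw G g \in U.
Proof.
move=> bg; have /andP [s2 _] := branch_size bg.
case: g bg s2 => [|x s] // bg s2.
case/lastP: s bg s2 => [|m y] // bg s2.
have al : all (fun v => v \notin S) m.
  by move: bg; case/andP => _ /andP [_ /andP [_ /andP [_ /andP [_]]]]; rewrite interior_rcons.
rewrite (pw_wt hloopG) // /= size_rcons !subSS subn0.
rewrite mulrC mulrAC (mulfK (expf_neq0 _ lam_neq0)).
exact: wt_U.
Qed.

Hypothesis hbeta : forall j, max_branch_to G S (val j) (beta j).

Lemma Lw_U i j t : Lw i j t \in U.
Proof.
apply: UD => //.
  case: ifP => _; last exact: U0.
  by have [[i0 b] _] := hbeta j; exact: (branch_term_U b).
apply: Usum => // k _; apply: Usum => // g bg.
case: ifP => _; last exact: U0.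
exact: (branch_term_U bg).
Qed.

Lemma weights_L : weights_in U L.
Proof.
move=> x y _; case: x => [i|p]; case: y => [j|q].
- by rewrite L_inl_inl Lw_U.
- by rewrite L_inl_inr Lw_U.
- by rewrite L_inr_inl Unat.
- by rewrite L_inr_inr Unat.
Qed.
End Weights.

End LCon.

Theorem theorem6 (V : finType) (G : graph V) (U : {pred W}) (S : {set V})
    (beta : {x : V | x \in S} -> seq V) :
  GRing.subring_closed U ->
  weights_in U G ->
  structural0 G S ->
  (forall v : V, exists (i j : V) (s : seq V), branchb G S i j s /\ v \in s) ->
  (forall j : {x : V | x \in S}, max_branch_to G S (val j) (beta j)) ->
  [/\ spec_equiv G (Lgraph G S beta),
      same_nonzero_spectrum G (Lgraph G S beta),
      (#|S| + \sum_(j : {x : V | x \in S}) (size (beta j) - 2) < #|V|)%N ->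
        is_reduction U G (Lgraph G S beta)
    & ~~ (#|S| + \sum_(j : {x : V | x \in S}) (size (beta j) - 2) < #|V|)%N ->
        is_expansion U G (Lgraph G S beta)].
Proof.
move=> hU hwG [[Sne hcycG hlamG] hloopG] _ hbeta.
have stL : structural (Lgraph G S beta) (T beta).
  split.
  - have [x xS] := set0Pn _ Sne; apply/set0Pn.
    by exists (inl (exist _ x xS)); rewrite inE.
  - exact: hcycL.
  - by move=> v vT; rewrite hloopL // eq_sym lam_neq0.
have SE : spec_equiv G (Lgraph G S beta).
  exists S, (T beta); split => //.
  exists (@fi V S beta); split; first exact: fi_bij.
  by move=> a b; rewrite RL_eq.
have wL := weights_L hU hwG hloopG hbeta.
split => //.
- have cG := charf_red hcycG hloopG.
  have cL := charf_red (@hcycL V G S beta) (@hloopL V G S beta).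
  have dE : detF (fun x y : {x : V | x \in S} => reduction_graph G S x y - (x == y)%:R * lam) =
            detF (fun x y : {x : Lvert S beta | x \in T beta} =>
                    reduction_graph (Lgraph G S beta) (T beta) x y - (x == y)%:R * lam).
    apply: (detF_bij (f := @fi V S beta)); first exact: fi_bij.
    by move=> a b; rewrite RL_eq // (inj_eq (bij_inj (@fi_bij V S beta))).
  have [p1 l1] := lowest_exists (charf G).
  have [p2 l2] := lowest_exists (charf (Lgraph G S beta)).
  exists p1, p2; split => // c c0.
  set rG := #|{: {x : V | x \in ~: S}}|.
  set rL := #|{: {x : Lvert S beta | x \in ~: T beta}}|.
  apply: (lowest_mup (u1 := (- 'X) ^+ rL) (u2 := (- 'X) ^+ rG) l1 l2).
  + rewrite cG cL -dE /polyW !rmorphXn /= !rmorphN /= -/(polyW 'X) -/lam.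
    by rewrite mulrAC [RHS]mulrAC; congr (_ * _); exact: mulrC.
  + by rewrite expf_neq0 // oppr_eq0 polyX_eq0.
  + by rewrite expf_neq0 // oppr_eq0 polyX_eq0.
  + by rewrite /root horner_exp hornerN hornerX expf_eq0 oppr_eq0 (negbTE c0) andbF.
  + by rewrite /root horner_exp hornerN hornerX expf_eq0 oppr_eq0 (negbTE c0) andbF.
- by move=> h; split => //; rewrite card_Lv.
- by rewrite -leqNgt => h; split => //; rewrite card_Lv.
Qed.
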